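(* Let $(x_c,y_c,\theta_c)\in\mathbb{R}^2\times\mathbb{S}$ and $t_g>0$, and assume there exists an optimal trajectory $(x(t),y(t),\theta(t))$, $t\in[0,t_g]$, of the MECP with duration $t_g$ such that $(x(0),y(0),\theta(0))=(x_c,y_c,\theta_c)$ and $(x(t_g),y(t_g),\theta(t_g))=(0,0,-\pi/2)$. Then for any $T>0$, $$u^*(t_g,x_c,y_c,\theta_c)=\frac{T}{t_g}\,u^*\!\left(T,\frac{T}{t_g}x_c,\frac{T}{t_g}y_c,\theta_c\right).$$
   Context: Kinematics: $\dot x=\cos\theta$, $\dot y=\sin\theta$, $\dot\theta=u$, with state $(x,y,\theta)\in\mathbb{R}^2\times\mathbb{S}$ ($\mathbb{S}$ the circle of angles) and measurable control $u$. The MECP with duration $t_g$ from state $\boldsymbol z_c$: steer the system on a time interval of length $t_g$ from $\boldsymbol z_c$ to the final state $(0,0,-\pi/2)$ while minimizing $\int \tfrac12u^2\,dt$ over that interval. The optimal feedback control $u^*(t_g,\boldsymbol z_c)$ denotes the value at the initial time of the optimal control of the MECP starting at state $\boldsymbol z_c$ with time-to-go $t_g$; equivalently, along an optimal trajectory $\boldsymbol z(t)$ with optimal control $u(t)$ on $[0,t_f]$, $u^*(t_f-t,\boldsymbol z(t))=u(t)$ for all $t\in[0,t_f)$. *)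

(* Defs.v *)
From HB Require Import structures.
From mathcomp Require Import all_boot all_order all_algebra.
From mathcomp Require Import all_classical all_reals all_analysis.
Set Implicit Arguments. Unset Strict Implicit. Unset Printing Implicit Defensive.
Import Order.TTheory GRing.Theory Num.Theory.
Import numFieldNormedType.Exports.
Local Open Scope classical_set_scope.
Local Open Scope ring_scope.

Section MECP.
Variable R : realType.
Local Notation mu := (@lebesgue_measure R).

Definition admissible (tf : R) (u : R -> R) : Prop :=
  measurable_fun `[0, tf] u /\
  mu.-integrable `[0, tf] (fun t => ((u t) ^+ 2)%:E).

Definition cost (tf : R) (u : R -> R) : R :=
  Rintegral mu `[0, tf] (fun t => (u t) ^+ 2 / 2).

(* (x, y, th) is the (absolutely continuous) solution on [0, tf] of
   x' = cos th, y' = sin th, th' = u starting at (xc, yc, thc). The angle is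
   represented by a real lift. *)
Definition trajectory (tf xc yc thc : R) (u x y th : R -> R) : Prop :=
  forall t, 0 <= t <= tf ->
    [/\ x t = xc + Rintegral mu `[0, t] (fun s => cos (th s)),
        y t = yc + Rintegral mu `[0, t] (fun s => sin (th s)) &
        th t = thc + Rintegral mu `[0, t] u].

Definition feasible (tf xc yc thc : R) (u : R -> R) : Prop :=
  admissible tf u /\
  exists x y th, trajectory tf xc yc thc u x y th /\
    x tf = 0 /\ y tf = 0 /\
    exists k : int, th tf = - (pi / 2) + k%:~R * (2 * pi).

Definition MECP_optimal (tf xc yc thc : R) (u : R -> R) : Prop :=
  feasible tf xc yc thc u /\
  forall v, feasible tf xc yc thc v -> cost tf u <= cost tf v.

(* "u^*(tf, zc) = v": v is the value at the initial time of an optimal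
   control of the MECP(tf, zc); the value at a point of a measurable control
   is taken for its continuous representative on [0, tf]. *)
Definition ustar_val (tf xc yc thc v : R) : Prop :=
  exists u, MECP_optimal tf xc yc thc u /\
    {within `[0, tf], continuous u} /\ u 0 = v.

End MECP.

(* Main.v *)
Require Import Defs.
From mathcomp Require Import all_boot all_order all_algebra.
From mathcomp Require Import all_classical all_reals all_analysis.
From mathcomp Require Import measurable_realfun ring lra.
Import Order.TTheory GRing.Theory Num.Theory.
Import numFieldNormedType.Exports.
Local Open Scope classical_set_scope.
Local Open Scope ring_scope.

Lemma mulEB {R : realType} (k : R) (P N : \bar R) : 0 < k -> (k%:E * P - k%:E * N = k%:E * (P - N))%E.
Proof.
move=> k0.
have ky : (k%:E * +oo = +oo)%E by rewrite mulry gtr0_sg // mul1e.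
have kNy : (k%:E * -oo = -oo)%E by rewrite mulrNy gtr0_sg // mul1e.
case: P => [p| |]; case: N => [n| |] //=; rewrite ?ky ?kNy //=.
by rewrite muleDr //; congr (_ + _); rewrite -EFinM mulrN.
Qed.

Section S.
Context {R : realType}.
Local Notation mu := (@lebesgue_measure R).

Lemma pre_scale_oc (c a b : R) : 0 < c ->
  ( *%R c) @^-1` `]a, b] = `]a / c, b / c]%classic.
Proof.
move=> c0; apply/seteqP; split => x /=; rewrite !in_itv /=;
  by rewrite ltr_pdivrMr // ler_pdivlMr // ![x * c]mulrC.
Qed.

Lemma pushforward_scale0 (c : R) (c0 : 0 < c) (A : set R) : measurable A ->
  mu A = ((NngNum (ltW c0))%:num%:E * pushforward mu ( *%R c : _ -> measurableTypeR R) A)%E.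
Proof.
move=> mA.
apply: (@lebesgue_measure_unique R (mscale (NngNum (ltW c0)) (pushforward mu ( *%R c : _ -> measurableTypeR R)))) => //.
move=> X /ocitvP [->|[[a b] /= ab ->]].
  by rewrite !measure0.
change (mu `]a, b]%classic = (c%:E * mu (( *%R c) @^-1` `]a, b]%classic))%E); rewrite pre_scale_oc //.
rewrite !lebesgue_measure_itv /= !lte_fin ab ltr_pM2r ?invr_gt0 // ab.
by rewrite -!EFinB -EFinM -mulrBl mulrCA divff ?gt_eqF // mulr1.
Qed.

Lemma ge0_integral_scale (c : R) (c0 : 0 < c) (D : set R) (f : R -> \bar R) :
  measurable D -> measurable_fun D f -> (forall x, D x -> (0 <= f x)%E) ->
  (\int[mu]_(x in ( *%R c) @^-1` D) f (c * x)%R =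
   (c^-1)%:E * \int[mu]_(x in D) f x)%E.
Proof.
move=> mD mf f0.
have mphi : measurable_fun [set: R] ( *%R c : _ -> measurableTypeR R).
  exact: mulrl_measurable.
transitivity (\int[pushforward mu ( *%R c : _ -> measurableTypeR R)]_(x in D) f x)%E.
  rewrite ge0_integral_pushforward //.
  by move=> y; rewrite inE; exact: f0.
have H : (\int[mu]_(x in D) f x = \int[mscale (NngNum (ltW c0)) (pushforward mu ( *%R c : measurableTypeR R -> measurableTypeR R))]_(x in D) f x)%E.
  move=> m; apply: eq_measure_integral => A mA _; exact: pushforward_scale0.
have mphi2 : measurable_fun [set: measurableTypeR R] ( *%R c : measurableTypeR R -> measurableTypeR R) by exact: mulrl_measurable.
rewrite (H mphi2).
rewrite ge0_integral_mscale //= muleA -EFinM mulVf ?gt_eqF // mul1e //.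
Qed.

Lemma measurable_pre_scale (c : R) (D : set R) : measurable D ->
  measurable (( *%R c) @^-1` D).
Proof.
move=> mD; rewrite -[X in measurable X]setTI.
exact: (@mulrl_measurable R setT c).
Qed.

Lemma integral_scale (c : R) (c0 : 0 < c) (D : set R) (f : R -> R) :
  measurable D -> measurable_fun D f ->
  (\int[mu]_(x in ( *%R c) @^-1` D) (f (c * x)%R)%:E =
   (c^-1)%:E * \int[mu]_(x in D) (f x)%:E)%E.
Proof.
move=> mD mf.
have mf' : measurable_fun D (EFin \o f) by exact/measurable_EFinP.
rewrite integralE [in RHS]integralE -mulEB ?invr_gt0 //.
congr (_ - _)%E.
  rewrite -(@ge0_integral_scale c c0 D _ mD (measurable_funepos mf') (fun x _ => funepos_ge0 _ x)).
  by apply: eq_integral => x _; rewrite !funeposE.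
rewrite -(@ge0_integral_scale c c0 D _ mD (measurable_funeneg mf') (fun x _ => funeneg_ge0 _ x)).
by apply: eq_integral => x _; rewrite !funenegE.
Qed.

Lemma integrable_scale (c : R) (c0 : 0 < c) (D : set R) (f : R -> R) :
  measurable D -> mu.-integrable D (EFin \o f) ->
  mu.-integrable (( *%R c) @^-1` D) (fun x => (f (c * x)%R)%:E).
Proof.
move=> mD /integrableP [mf fi]; apply/integrableP; split.
  apply: (measurable_comp mD _ mf); last exact: mulrl_measurable.
  by move=> _ [x Dx <-].
have := @ge0_integral_scale c c0 D (abse \o (EFin \o f)) mD (measurableT_comp (@abse_measurable R setT) mf) (fun x _ => abse_ge0 _).
move=> /= ->.
by rewrite lte_mul_pinfty ?lee_fin ?invr_ge0 ?ltW...
Qed.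

Lemma pre_scale_cc (c a : R) : 0 < c ->
  ( *%R c) @^-1` `[0, c * a] = `[0, a]%classic.
Proof.
move=> c0; apply/seteqP; split => x /=; rewrite !in_itv /=;
  by rewrite pmulr_rge0 // ler_pM2l.
Qed.

Lemma integrable_scale0 (c : R) (c0 : 0 < c) (a : R) (f : R -> R) :
  mu.-integrable `[0, c * a] (EFin \o f) ->
  mu.-integrable `[0, a] (fun x => (f (c * x)%R)%:E).
Proof.
by move=> fi; rewrite -(pre_scale_cc c a c0); apply: integrable_scale.
Qed.

Lemma Rint_scale (c : R) (c0 : 0 < c) (a : R) (f : R -> R) :
  mu.-integrable `[0, c * a] (EFin \o f) ->
  \int[mu]_(x in `[0, a]) (c * f (c * x)) = \int[mu]_(x in `[0, c * a]) f x.
Proof.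
move=> fi.
rewrite RintegralZl //; last exact: integrable_scale0.
rewrite /Rintegral -(pre_scale_cc c a c0) integral_scale //; last first.
  by case/integrableP: fi => /measurable_EFinP.
rewrite fineM // ?integrable_fin_num // mulrA divff ?gt_eqF // mul1r.
by [].

Qed.
End S.

Section T.
Context {R : realType}.
Local Notation mu := (@lebesgue_measure R).

Lemma abs_le_1sq (a : R) : `|a| <= 1 + a ^+ 2.
Proof. rewrite -real_normK ?num_real //; have := normr_ge0 a; nra. Qed.

Lemma cst_int (tf k : R) : mu.-integrable `[0, tf] (EFin \o cst k).
Proof.
apply: continuous_compact_integrable; first exact: segment_compact.
exact: cst_continuous.
Qed.

Lemma adm_integrable tf u : admissible tf u -> mu.-integrable `[0,tf] (EFin \o u).
Proof.
case=> mu_ iu2.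
have ig : mu.-integrable `[0,tf] (fun t => (1 + u t ^+ 2)%:E).
  apply: (eq_integrable _ _ _ _ (integrableD _ (cst_int tf 1) iu2)) => // t _.
apply: (le_integrable _ _ _ ig) => //.
  exact/measurable_EFinP.
move=> t _ /=; rewrite lee_fin; apply: (le_trans (abs_le_1sq _)); exact: ler_norm.
Qed.

Lemma th_cont (g : R -> R) (tf thc : R) (u : R -> R) : continuous g -> 0 <= tf ->
  mu.-integrable `[0,tf] (EFin \o u) ->
  {within `[0, tf], continuous (fun r => g (thc + \int[mu]_(t in `[0, r]) u t))}.
Proof.
move=> cg tf0 iu.
have := parameterized_integral_continuous tf0 iu.
move=> ci x.
apply: continuous_comp; last exact: cg.
apply: continuousD; first exact: cst_continuous.
exact: ci.
Qed.

Lemma int_sub (tf b : R) (f : R -> \bar R) : b <= tf ->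
  mu.-integrable `[0, tf] f -> mu.-integrable `[0, b] f.
Proof.
move=> btf; apply: integrableS => //.
by apply: subset_itvl; rewrite bnd_simp.
Qed.

Lemma integrable_scale1 (c : R) (c0 : 0 < c) (a b : R) (f : R -> R) :
  c * a = b -> mu.-integrable `[0, b] (EFin \o f) ->
  mu.-integrable `[0, a] (fun x => (f (c * x)%R)%:E).
Proof. by move=> <-; exact: integrable_scale0. Qed.

Lemma Rint_scale1 (c : R) (c0 : 0 < c) (a b : R) (f : R -> R) :
  c * a = b -> mu.-integrable `[0, b] (EFin \o f) ->
  \int[mu]_(x in `[0, a]) (c * f (c * x)) = \int[mu]_(x in `[0, b]) f x.
Proof. by move=> <-; exact: Rint_scale. Qed.

Lemma feasible_transfer (k tf xc yc thc : R) (u : R -> R) : 0 < k -> 0 < tf ->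
  feasible tf xc yc thc u ->
  feasible (k * tf) (k * xc) (k * yc) thc (fun s => k^-1 * u (k^-1 * s)) /\
  cost (k * tf) (fun s => k^-1 * u (k^-1 * s)) = k^-1 * cost tf u.
Proof.
move=> k0 tf0 [adm [x [y [th [tr [x0 [y0 [n thf]]]]]]]].
have c0 : 0 < k^-1 by rewrite invr_gt0.
have ck a : k^-1 * (k * a) = a by rewrite mulrA mulVf ?gt_eqF // mul1r.
have iu := adm_integrable tf u adm.
have [mu_ iu2] := adm.
have thE : {in `[0, tf], forall r, th r = thc + \int[mu]_(t in `[0, r]) u t}.
  by move=> r; rewrite in_itv /= => /tr [_ _ ->].
have icos : mu.-integrable `[0,tf] (EFin \o (fun s => cos (th s))).
  have h : mu.-integrable `[0,tf] (EFin \o (fun r => cos (thc + \int[mu]_(t in `[0, r]) u t))).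
    apply: continuous_compact_integrable; first exact: segment_compact.
    exact: (th_cont _ _ _ _ (@continuous_cos R) (ltW tf0) iu).
  apply: (eq_integrable _ _ _ _ h) => // r rI /=; rewrite thE //; by move: rI; rewrite inE.
have isin : mu.-integrable `[0,tf] (EFin \o (fun s => sin (th s))).
  have h : mu.-integrable `[0,tf] (EFin \o (fun r => sin (thc + \int[mu]_(t in `[0, r]) u t))).
    apply: continuous_compact_integrable; first exact: segment_compact.
    exact: (th_cont _ _ _ _ (@continuous_sin R) (ltW tf0) iu).
  apply: (eq_integrable _ _ _ _ h) => // r rI /=; rewrite thE //; by move: rI; rewrite inE.
have ckt : k^-1 * (k * tf) = tf := ck tf.
have iw : mu.-integrable `[0, k * tf] (fun s => (u (k^-1 * s)%R)%:E).
  exact: (integrable_scale1 _ c0 _ _ _ ckt iu).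
have iw2 : mu.-integrable `[0, k * tf] (fun s => ((u (k^-1 * s)) ^+ 2)%:E).
  exact: (integrable_scale1 _ c0 _ _ (fun t => u t ^+ 2) ckt iu2).
split; last first.
  rewrite /cost.
  have ih : mu.-integrable `[0, tf] (EFin \o (fun t => u t ^+ 2 / 2)).
    have h2 : mu.-integrable `[0, tf] (fun t => ((2^-1)%:E * (u t ^+ 2)%:E)%E).
      by apply: integrableZl.
    by apply: (eq_integrable _ _ _ _ h2) => // t _; rewrite -EFinM mulrC.
  have ih2 : mu.-integrable `[0, tf] (EFin \o (fun t => k^-1 * (u t ^+ 2 / 2))).
    have h2 : mu.-integrable `[0, tf] (fun t => ((k^-1)%:E * (u t ^+ 2 / 2)%:E)%E).
      by apply: integrableZl.
    by apply: (eq_integrable _ _ _ _ h2) => // t _; rewrite -EFinM.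
  transitivity (\int[mu]_(s in `[0, k * tf]) (k^-1 * ((fun t => k^-1 * (u t ^+ 2 / 2)) (k^-1 * s)))).
    by apply: eq_Rintegral => s _ /=; rewrite exprMn expr2; ring.
  rewrite (Rint_scale1 _ c0 _ _ _ ckt ih2).
  by rewrite RintegralZl.
split.
  split.
    apply: (measurable_funM (f := cst k^-1)) => //.
    by case/integrableP: iw => /measurable_EFinP.
  have h2 : mu.-integrable `[0, k * tf] (fun s => ((k^-1 ^+ 2)%:E * (u (k^-1 * s) ^+ 2)%:E)%E).
    by apply: integrableZl.
  by apply: (eq_integrable _ _ _ _ h2) => // t _; rewrite -EFinM exprMn.
exists (fun s => k * x (k^-1 * s)), (fun s => k * y (k^-1 * s)), (fun s => th (k^-1 * s)).
split; last first.
  rewrite /= !ckt x0 y0 mulr0; split=> //; split=> //; by exists n.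
move=> s /andP[s0 sk].
have cs0 : 0 <= k^-1 * s by rewrite mulr_ge0 // ltW.
have cstf : k^-1 * s <= tf by rewrite -ckt ler_pM2l.
have := tr (k^-1 * s); rewrite cs0 cstf => /(_ isT) [ex ey eth].
split.
- rewrite /= ex mulrDr; congr (_ + _).
  have ic := int_sub _ _ _ cstf icos.
  rewrite -(Rint_scale1 _ c0 s (k^-1 * s) _ erefl ic).
  rewrite RintegralZl //; first by rewrite mulrA divff ?gt_eqF // mul1r.
  exact: (integrable_scale1 _ c0 _ _ (fun r => cos (th r)) erefl ic).
- rewrite /= ey mulrDr; congr (_ + _).
  have ic := int_sub _ _ _ cstf isin.
  rewrite -(Rint_scale1 _ c0 s (k^-1 * s) _ erefl ic).
  rewrite RintegralZl //; first by rewrite mulrA divff ?gt_eqF // mul1r.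
  exact: (integrable_scale1 _ c0 _ _ (fun r => sin (th r)) erefl ic).
- by rewrite /= eth (Rint_scale1 _ c0 s (k^-1 * s) u erefl (int_sub _ _ _ cstf iu)).
Qed.

Lemma cont_transfer (k tf : R) (u : R -> R) : 0 < k ->
  {within `[0, tf], continuous u} ->
  {within `[0, k * tf], continuous (fun s => k^-1 * u (k^-1 * s))}.
Proof.
move=> k0 /subspace_continuousP hu; apply/subspace_continuousP => x Ax.
have AB : forall s, `[0, k * tf]%classic s -> `[0, tf]%classic (k^-1 * s).
  move=> s; rewrite /= !in_itv /= => /andP[s0 sk].
  apply/andP; split; first by rewrite mulr_ge0 // invr_ge0 ltW.
  have -> : tf = k^-1 * (k * tf) by rewrite mulrA mulVf ?gt_eqF // mul1r.
  by rewrite ler_pM2l ?invr_gt0.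
have phic : (fun s => k^-1 * s) @ within `[0, k * tf] (nbhs x) --> within `[0, tf] (nbhs (k^-1 * x)).
  move=> P /= hP.
  have h1 : (k^-1 * s @[s --> x] --> k^-1 * x) by apply: cvgMr; exact: cvg_id.
  have := h1 (fun z => `[0, tf]%classic z -> P z) hP.
  rewrite !nbhs_simpl /= /within /=; apply: filterS => s h As; apply: h; have := AB _ As; by rewrite /= inE.
apply: cvgMr.
exact: (cvg_comp _ _ phic (hu _ (AB _ Ax))).
Qed.

Lemma opt_transfer (k tf xc yc thc : R) (u : R -> R) : 0 < k -> 0 < tf ->
  MECP_optimal tf xc yc thc u ->
  MECP_optimal (k * tf) (k * xc) (k * yc) thc (fun s => k^-1 * u (k^-1 * s)).
Proof.
move=> k0 tf0 [fu optu].
have [fw cw] := feasible_transfer _ _ _ _ _ _ k0 tf0 fu.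
split => // v fv.
have k'0 : 0 < k^-1 by rewrite invr_gt0.
have ktf0 : 0 < k * tf by rewrite mulr_gt0.
have [fv' cv'] := feasible_transfer _ _ _ _ _ _ k'0 ktf0 fv.
have ck a : k^-1 * (k * a) = a by rewrite mulrA mulVf ?gt_eqF // mul1r.
rewrite !ck in fv' cv'.
have := optu _ fv'; rewrite cv' invrK => h.
rewrite cw -(ler_pM2l k0) mulrA divff ?gt_eqF // mul1r.
exact: h.
Qed.
End T.

Theorem lemma3 (R : realType) (xc yc thc tg : R) :
  0 < tg ->
  (exists u : R -> R, MECP_optimal tg xc yc thc u) ->
  forall T : R, 0 < T ->
  forall v : R,
    ustar_val tg xc yc thc v <->
    ustar_val T (T / tg * xc) (T / tg * yc) thc (tg / T * v).
Proof.
move=> tg0 _ T T0 v; split.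
- case=> u [opt [cu u0]].
  have k0 : 0 < T / tg by rewrite divr_gt0.
  have e : T / tg * tg = T by rewrite mulrVK ?unitfE ?gt_eqF.
  exists (fun s => (T / tg)^-1 * u ((T / tg)^-1 * s)); split; [|split].
  + by have := opt_transfer _ _ _ _ _ _ k0 tg0 opt; rewrite e.
  + by have := cont_transfer _ _ _ k0 cu; rewrite e.
  + by rewrite mulr0 u0 invf_div.
- case=> w [opt [cw w0]].
  have k0 : 0 < tg / T by rewrite divr_gt0.
  have e : tg / T * T = tg by rewrite mulrVK ?unitfE ?gt_eqF.
  have e2 a : tg / T * (T / tg * a) = a.
    have hT : T != 0 by rewrite gt_eqF.
    have htg : tg != 0 by rewrite gt_eqF.
    by field; rewrite htg hT.
  exists (fun s => (tg / T)^-1 * w ((tg / T)^-1 * s)); split; [|split].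
  + by have := opt_transfer _ _ _ _ _ _ k0 T0 opt; rewrite e !e2.
  + by have := cont_transfer _ _ _ k0 cw; rewrite e.
  + by rewrite mulr0 w0 mulrA mulVf ?gt_eqF // mul1r.
Qed.
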